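(* Let $E,E'$ be finite sets with $|E'|=2$, $F:\mathcal P(E)\to\mathbb R$ twice continuously differentiable, $\alpha[b]\in\mathcal P(E)$ ($b\in E'$), $\pi\in\mathcal P(E')$ with $\pi(b)>0$ for all $b$, and assume the non-degeneracy conditions 1) and 2) (see context), with the set of minimizers $M^*$ satisfying $|M^*|\geq 2$. Then the set $M^{**}:=\{\hat\nu\in M^*: w_{\hat\nu}>0\}$ of visible pure phases has exactly two elements, and $w_{\hat\nu}=\tfrac12$ for both $\hat\nu\in M^{**}$.
   Context: Free energy $\Phi[\pi](\hat\nu)=F(\pi\cdot\hat\nu)+\sum_b\pi(b)S(\hat\nu(b)|\alpha[b])$ on $\mathcal P(E)^{E'}$, $\pi\cdot\hat\nu=\sum_b\pi(b)\hat\nu(b)$, $S(p|q)=\sum_ap(a)\log(p(a)/q(a))$. Non-degeneracy 1): $\Phi[\pi]$ has a finite set of minimizers $M^*$, each with positive definite Hessian. For $\hat\nu\in M^*$, the stability vector $B_{\hat\nu}\in T\mathcal P(E')=\{x\in\mathbb R^{E'}:\sum x=0\}$ is defined by $\langle x,B_{\hat\nu}\rangle=-(dF_{\pi\cdot\hat\nu}(\sum_bx(b)\hat\nu(b))+\sum_bx(b)S(\hat\nu(b)|\alpha[b]))$ for all $x\in T\mathcal P(E')$, where $dF_\nu$ is the differential of $F$ on $T\mathcal P(E)$. Non-degeneracy 2): distinct minimizers have distinct stability vectors. The weight of $\hat\nu\in M^*$ is $w_{\hat\nu}=\mathbb P(G\in R_{\hat\nu})$ with $R_{\hat\nu}=\{x\in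 T\mathcal P(E'):\langle x,B_{\hat\nu}\rangle>\max_{\hat\nu'\in M^*\setminus\{\hat\nu\}}\langle x,B_{\hat\nu'}\rangle\}$, and $G$ a centered Gaussian vector in $T\mathcal P(E')$ with covariance $C_\pi(b,b')=\pi(b)1_{b=b'}-\pi(b)\pi(b')$. (These are the weights appearing in the AW-metastate $\kappa[\eta]=\sum_{\hat\nu}w_{\hat\nu}\delta_{\mu_{\hat\nu}[\eta]}$ of the model with Gibbs measures $\mu_{F,n}[\eta](\omega)\propto e^{-nF(L_n^\omega)}\prod_i\alpha[\eta(i)](\omega(i))$, $\eta$ i.i.d. $\pi$.) *)

(* Defs.v *)
From HB Require Import structures.
From mathcomp Require Import all_boot all_order all_algebra.
From mathcomp Require Import all_classical all_reals all_analysis.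
Set Implicit Arguments. Unset Strict Implicit. Unset Printing Implicit Defensive.
Import Order.TTheory GRing.Theory Num.Theory.
Import numFieldNormedType.Exports.
Local Open Scope classical_set_scope.
Local Open Scope ring_scope.

Section Defs.
Context {R : realType}.

Definition inP {E : finType} (p : E -> R) : Prop :=
  (forall a, 0 <= p a) /\ \sum_(a : E) p a = 1.
Definition inTP {E : finType} (x : E -> R) : Prop := \sum_(a : E) x a = 0.

(* relative entropy S(p|q) = sum_a p(a) log(p(a)/q(a)) (real part; it is
   finite exactly when p << q, see [abs_cont]) *)
Definition relent {E : finType} (p q : E -> R) : R :=
  \sum_(a : E) p a * ln (p a / q a).
Definition abs_cont {E : finType} (p q : E -> R) : Prop :=
  forall a, q a = 0 -> p a = 0.

Definition dirD {E : finType} (F : (E -> R) -> R) (u x : E -> R) : R :=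
  derive1 (fun t : R => F (fun a => x a + t * u a)) 0.

(* F twice continuously differentiable (on R^E, with the product = Euclidean
   topology): all first and second directional derivatives exist everywhere
   and F, its first and its second directional derivatives are continuous. *)
Definition C2 {E : finType} (F : (E -> R) -> R) : Prop :=
  continuous (F : {ptws E -> R} -> R) /\
  forall u v : E -> R,
    (forall x, derivable (fun t : R => F (fun a => x a + t * u a)) 0 1) /\
    (forall x, derivable (fun t : R => dirD F u (fun a => x a + t * v a)) 0 1) /\
    continuous (dirD F u : {ptws E -> R} -> R) /\
    continuous (dirD (dirD F u) v : {ptws E -> R} -> R).

Variables (E E' : finType) (F : (E -> R) -> R) (alpha : E' -> E -> R)
  (pi : E' -> R).

Definition mix (nu : E' -> E -> R) : E -> R :=
  fun a => \sum_(b : E') pi b * nu b a.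

Definition Phi (nu : E' -> E -> R) : R :=
  F (mix nu) + \sum_(b : E') pi b * relent (nu b) (alpha b).

(* points of P(E)^E' where Phi is finite *)
Definition dom_Phi (nu : E' -> E -> R) : Prop :=
  (forall b, inP (nu b)) /\ (forall b, abs_cont (nu b) (alpha b)).

(* global minimizers of Phi[pi] on P(E)^E'  (Phi = +oo off dom_Phi) *)
Definition Mstar : set (E' -> E -> R) :=
  [set nu | dom_Phi nu /\ forall nu', dom_Phi nu' -> Phi nu <= Phi nu'].

(* tangent directions to P(E)^E' within the effective domain of Phi *)
Definition tangent_dir (h : E' -> E -> R) : Prop :=
  (forall b, inTP (h b)) /\ (forall b a, alpha b a = 0 -> h b a = 0).

Definition pos_def_hessian (nu : E' -> E -> R) : Prop :=
  forall h : E' -> E -> R, tangent_dir h -> (exists b a, h b a != 0) ->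
    let f := fun t : R => Phi (fun b a => nu b a + t * h b a) in
    (\forall t \near (0 : R), derivable f t 1) /\
    derivable (derive1 f) 0 1 /\ 0 < derive1 (derive1 f) 0.

Definition stability_vector (nu : E' -> E -> R) (beta : E' -> R) : Prop :=
  inTP beta /\
  forall x : E' -> R, inTP x ->
    \sum_(b : E') x b * beta b =
    - (dirD F (fun a => \sum_(b : E') x b * nu b a) (mix nu)
       + \sum_(b : E') x b * relent (nu b) (alpha b)).

Definition Cpi (b b' : E') : R := pi b * (b == b')%:R - pi b * pi b'.
Definition quadC (x : E' -> R) : R :=
  \sum_(b : E') \sum_(b' : E') x b * Cpi b b' * x b'.

Definition region (B : (E' -> E -> R) -> E' -> R) (nu : E' -> E -> R)
  : set (E' -> R) :=
  [set x | inTP x /\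
     forall nu', Mstar nu' -> nu' <> nu ->
       \sum_(b : E') x b * B nu' b < \sum_(b : E') x b * B nu b].

(* G : Omega -> R^E' is a centered Gaussian vector with covariance C_pi:
   each coordinate is measurable and every linear functional <x,G> is
   centered normal with variance x^T C_pi x (a.s. 0 when the variance is 0) *)
Definition gaussian_Cpi {d : measure_display} {Omega : measurableType d}
  (P : probability Omega R) (G : Omega -> E' -> R) : Prop :=
  (forall b, measurable_fun setT (fun w => G w b)) /\
  forall x : E' -> R,
    (0 < quadC x ->
       forall A : set R, measurable A ->
         P [set w | A (\sum_(b : E') x b * G w b)] =
         normal_prob 0 (Num.sqrt (quadC x)) A) /\
    (quadC x = 0 ->
       P [set w | \sum_(b : E') x b * G w b = 0] = 1%E).

Definition weight {d : measure_display} {Omega : measurableType d}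
  (P : probability Omega R) (G : Omega -> E' -> R)
  (B : (E' -> E -> R) -> E' -> R) (nu : E' -> E -> R) : \bar R :=
  P [set w | region B nu (G w)].

Definition Mstarstar {d : measure_display} {Omega : measurableType d}
  (P : probability Omega R) (G : Omega -> E' -> R)
  (B : (E' -> E -> R) -> E' -> R) : set (E' -> E -> R) :=
  [set nu | Mstar nu /\ (0 < weight P G B nu)%E].

End Defs.

(* Main.v *)
Require Import Defs.
From HB Require Import structures.
From mathcomp Require Import all_boot all_order all_algebra.
From mathcomp Require Import all_classical all_reals all_analysis.
From mathcomp Require Import lra ring.
Import Order.TTheory GRing.Theory Num.Theory.
Local Open Scope classical_set_scope.
Local Open Scope ring_scope.

Lemma two_elems (T : finType) : #|T| = 2%N ->
  exists b1 b2 : T, b1 != b2 /\ forall b, b = b1 \/ b = b2.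
Proof.
rewrite cardE => hs.
have u := enum_uniq T.
have mem b : b \in enum T := mem_enum T b.
move: hs u mem.
case: (enum T) => [|b1 [|b2 [|]]] //= _ /andP[nb _] mem.
exists b1, b2; split; first by move: nb; rewrite inE.
by move=> b; move: (mem b); rewrite !inE => /orP[/eqP->|/eqP->]; [left|right].
Qed.

Lemma sum2 (T : finType) (V : nmodType) (b1 b2 : T) :
  b1 != b2 -> (forall b, b = b1 \/ b = b2) ->
  forall f : T -> V, \sum_(b : T) f b = f b1 + f b2.
Proof.
move=> nb hb f.
rewrite (bigD1 b1) //= (bigD1 b2) /=; last by rewrite eq_sym.
rewrite big1 ?addr0 // => b /andP[h1 h2].
by case: (hb b) => hh; move: h1 h2; rewrite hh eqxx ?andbF.
Qed.

Lemma seq_max (R : realType) (s : seq R) : s != [::] ->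
  exists2 m, m \in s & forall y, y \in s -> y <= m.
Proof.
elim: s => // x s IH _.
case: (eqVneq s [::]) => [->|/IH [m ms mub]].
  by exists x; rewrite ?inE // => y; rewrite inE => /eqP->.
have [xm|mx] := leP x m.
  exists m; first by rewrite inE ms orbT.
  by move=> y; rewrite inE => /orP[/eqP->|/mub].
exists x; first by rewrite inE eqxx.
move=> y; rewrite inE => /orP[/eqP->//|/mub ym].
exact: (le_trans ym (ltW mx)).
Qed.

Lemma fin_max (R : realType) (T : Type) (M : set T) (c : T -> R) :
  finite_set M -> (exists x, M x) ->
  exists2 x, M x & forall y, M y -> c y <= c x.
Proof.
move=> fM [x0 Mx0].
have /finite_seqP [s hs] := finite_image c fM.
have s0 : s != [::].
  have : [set c x | x in M] (c x0) by exists x0.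
  by rewrite hs; case: s {hs}.
have [m ms mub] := @seq_max R s s0.
have : [set c x | x in M] m by rewrite hs.
case=> x Mx cxm; exists x => // y My.
rewrite cxm; apply: mub.
have : [set c x | x in M] (c y) by exists y.
by rewrite hs.
Qed.

Lemma fin_min (R : realType) (T : Type) (M : set T) (c : T -> R) :
  finite_set M -> (exists x, M x) ->
  exists2 x, M x & forall y, M y -> c x <= c y.
Proof.
move=> fM ne; have [x Mx h] := @fin_max R T M (fun x => - c x) fM ne.
by exists x => // y /h; rewrite lerN2.
Qed.

Lemma probI1 d (T : measurableType d) (R : realType) (P : probability T R)
  (Z S : set T) : measurable Z -> measurable S -> P Z = 1%E ->
  P (Z `&` S) = P S.
Proof.
move=> mZ mS PZ.
rewrite (measureDI P mS mZ) [Z `&` S]setIC.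
rewrite -[X in X = _]add0e; congr (_ + _)%E; apply/esym.
apply/eqP; rewrite -measure_le0.
have : P (~` Z) = 0%E by rewrite probability_setC // PZ subee.
move=> <-; apply: le_measure; rewrite ?inE.
- exact: measurableD.
- exact: measurableC.
- by move=> w [].
Qed.
Lemma half_half d (T : measurableType d) (R : realType) (P : probability T R)
  (Y : T -> R) (s : R) : measurable_fun setT Y ->
  (forall A, measurable A -> P (Y @^-1` A) = normal_prob 0 s A) ->
  (forall A, measurable A -> P ((fun w => - Y w) @^-1` A) = normal_prob 0 s A) ->
  P [set w | 0 < Y w] = (1/2)%:E /\ P [set w | Y w < 0] = (1/2)%:E.
Proof.
move=> mY hY hN.
have mpre A : measurable A -> measurable (Y @^-1` A).
  by move=> mA; have := mY measurableT _ mA; rewrite setTI.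
have epos : [set w | 0 < Y w] = Y @^-1` `]0, +oo[.
  by apply/seteqP; split => w /=; rewrite in_itv /= andbT.
have eneg : [set w | Y w < 0] = Y @^-1` `]-oo, 0[.
  by apply/seteqP; split => w /=; rewrite in_itv /=.
have eneg' : [set w | Y w < 0] = (fun w => - Y w) @^-1` `]0, +oo[.
  by apply/seteqP; split => w /=; rewrite in_itv /= andbT oppr_gt0.
have ezer : [set w | Y w = 0] = Y @^-1` [set 0].
  by [].
have mP : measurable [set w | 0 < Y w] by rewrite epos; apply: mpre.
have mN : measurable [set w | Y w < 0] by rewrite eneg; apply: mpre.
have mZ : measurable [set w | Y w = 0] by rewrite ezer; apply: mpre.
have PP : P [set w | 0 < Y w] = normal_prob 0 s `]0, +oo[ by rewrite epos hY.
have PN : P [set w | Y w < 0] = normal_prob 0 s `]0, +oo[ by rewrite eneg' hN.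
have PZ : P [set w | Y w = 0] = 0%E by rewrite ezer hY // /normal_prob integral_set1.
have tot : [set: T] = ([set w | 0 < Y w] `|` [set w | Y w < 0]) `|` [set w | Y w = 0].
  apply/seteqP; split => w // _ /=.
  by case: (ltgtP (Y w) 0) => h; [left; right|left; left|right].
have d1 : [set w | 0 < Y w] `&` [set w | Y w < 0] = set0.
  by apply/seteqP; split => w // [/= h1 h2]; have := lt_trans h1 h2; rewrite ltxx.
have d2 : ([set w | 0 < Y w] `|` [set w | Y w < 0]) `&` [set w | Y w = 0] = set0.
  by apply/seteqP; split => w // [/= [h1|h1] h2]; move: h1; rewrite h2 ltxx.
have := probability_setT P.
rewrite tot measureU //; last exact: measurableU.
rewrite measureU //.
move=> H.
have {H} : (P [set w | (0 < Y w)%R] + P [set w | (Y w < 0)%R] + P [set w | Y w = 0%R] = 1)%E := H.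
rewrite PZ adde0 PN -PP.
have h0 := measure_ge0 P [set w | 0 < Y w].
have h1 := probability_le1 P mP.
move: h0 h1; case: (P [set w | 0 < Y w]) => [r| |] //= h0 h1.
rewrite -EFinD => /eqP; rewrite eqe => /eqP hr.
have -> : r = 1/2 by lra.
by split.
Qed.

Lemma pos_of_lt (R : realType) (y a b : R) : a < b -> y * a < y * b -> 0 < y.
Proof. by move=> h1 h2; nra. Qed.
Lemma neg_of_lt (R : realType) (y a b : R) : a < b -> y * b < y * a -> y < 0.
Proof. by move=> h1 h2; nra. Qed.
Lemma mul_lt_pos (R : realType) (y a b : R) : 0 < y -> a < b -> y * a < y * b.
Proof. by move=> h1 h2; nra. Qed.
Lemma mul_lt_neg (R : realType) (y a b : R) : y < 0 -> a < b -> y * b < y * a.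
Proof. by move=> h1 h2; nra. Qed.

Theorem mainTheorem4 (R : realType) (E E' : finType)
  (F : (E -> R) -> R) (alpha : E' -> E -> R) (pi : E' -> R)
  (d : measure_display) (Omega : measurableType d) (P : probability Omega R)
  (G : Omega -> E' -> R) (B : (E' -> E -> R) -> E' -> R) :
  #|E'| = 2%N ->
  C2 F ->
  (forall b, inP (alpha b)) ->
  inP pi -> (forall b, 0 < pi b) ->
  (* non-degeneracy 1) *)
  finite_set (Mstar F alpha pi) ->
  (forall nu, Mstar F alpha pi nu -> pos_def_hessian F alpha pi nu) ->
  (* B nu is the stability vector of each minimizer nu *)
  (forall nu, Mstar F alpha pi nu -> stability_vector F alpha pi nu (B nu)) ->
  (* non-degeneracy 2) *)
  (forall nu nu', Mstar F alpha pi nu -> Mstar F alpha pi nu' ->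
     nu <> nu' -> B nu <> B nu') ->
  (* |M*| >= 2 *)
  (exists nu1 nu2, Mstar F alpha pi nu1 /\ Mstar F alpha pi nu2 /\ nu1 <> nu2) ->
  gaussian_Cpi pi P G ->
  exists nu1 nu2, nu1 <> nu2 /\
    Mstarstar F alpha pi P G B = [set nu1; nu2] /\
    weight F alpha pi P G B nu1 = (1 / 2)%:E /\
    weight F alpha pi P G B nu2 = (1 / 2)%:E.
Proof.
move=> card2 _ _ [_ pisum] pipos finM _ hstab hnd [nu1 [nu2 [M1 [M2 n12]]]] [hmeas hgauss].
have [b1 [b2 [nb hb]]] := @two_elems E' card2.
have nb' : (b2 == b1) = false by apply/negbTE; rewrite eq_sym.
have S2 : forall f : E' -> R, \sum_(b : E') f b = f b1 + f b2 := @sum2 E' R b1 b2 nb hb.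
have pi12 : pi b1 + pi b2 = 1 by rewrite -S2.
have p1 := pipos b1; have p2 := pipos b2.
set M := Mstar F alpha pi.
pose c nu := B nu b1.
have hB2 nu : M nu -> B nu b2 = - c nu.
  move=> /hstab [h _]; move: h; rewrite /inTP S2 => /eqP.
  by rewrite addrC addr_eq0 => /eqP.
have cinj nu nu' : M nu -> M nu' -> nu <> nu' -> c nu <> c nu'.
  move=> Mn Mn' nn' ceq; apply: (hnd nu nu' Mn Mn' nn').
  by apply/funext => b; case: (hb b) => ->; rewrite // !hB2 // ceq.
have [numax Mmax hmax] := @fin_max R _ M c finM (ex_intro _ nu1 M1).
have [numin Mmin hmin] := @fin_min R _ M c finM (ex_intro _ nu1 M1).
have nmm : numax <> numin.
  move=> e; apply: (cinj _ _ M1 M2 n12).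
  have e1 : c nu1 = c numin by apply/eqP; rewrite eq_le hmin // -e hmax.
  have e2 : c nu2 = c numin by apply/eqP; rewrite eq_le hmin // -e hmax.
  by rewrite e1 e2.
have cmm : c numin < c numax.
  rewrite lt_neqAle hmin // andbT; apply/eqP; apply: cinj => //.
  by move=> h; apply: nmm.
have smax nu : M nu -> nu <> numax -> c nu < c numax.
  by move=> Mn nn; rewrite lt_neqAle hmax // andbT; apply/eqP; exact: cinj.
have smin nu : M nu -> nu <> numin -> c numin < c nu.
  move=> Mn nn; rewrite lt_neqAle hmin // andbT; apply/eqP; apply: cinj => //.
  by move=> h; apply: nn.
have pi2e : pi b2 = 1 - pi b1 by rewrite -pi12 addrAC subrr add0r.
pose e b : R := if b == b1 then 1 else -1.
pose em b : R := if b == b1 then -1 else 1.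
pose Y w := G w b1 - G w b2.
have Ye w : \sum_b e b * G w b = Y w by rewrite S2 /e eqxx nb' mul1r mulN1r.
have Yem w : \sum_b em b * G w b = - Y w.
  by rewrite S2 /em eqxx nb' mul1r mulN1r opprB addrC.
have qe : quadC pi e = 4 * pi b1 * pi b2.
  by rewrite /quadC /Cpi !S2 /e !eqxx nb' (negbTE nb) /= pi2e; ring.
have qem : quadC pi em = quadC pi e.
  by rewrite qe /quadC /Cpi !S2 /em !eqxx nb' (negbTE nb) /= pi2e; ring.
have q1 : quadC pi (fun=> 1) = 0.
  by rewrite /quadC /Cpi !S2 !eqxx nb' (negbTE nb) /= pi2e; ring.
have qpos : 0 < quadC pi e by rewrite qe mulr_gt0 // mulr_gt0.
have mlin x : measurable_fun setT (fun w => \sum_(b : E') x b * G w b).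
  apply: measurable_sum => b.
  exact: (measurable_realfun.measurable_funM (measurable_cst (x b)) (hmeas b)).
have mY : measurable_fun setT Y.
  have -> : Y = (fun w => \sum_(b : E') e b * G w b) by apply/funext => w; rewrite Ye.
  exact: mlin.
have hY A : measurable A -> P (Y @^-1` A) =
    normal_prob 0 (Num.sqrt (quadC pi e)) A.
  move=> mA; rewrite -((hgauss e).1 qpos A mA); congr (P _).
  by apply/funext => w /=; rewrite Ye.
have hN A : measurable A -> P ((fun w => - Y w) @^-1` A) =
    normal_prob 0 (Num.sqrt (quadC pi e)) A.
  move=> mA; rewrite -qem -((hgauss em).1 _ A mA); last by rewrite qem.
  by congr (P _); apply/funext => w /=; rewrite Yem.
have [hpos hneg] := @half_half _ _ _ P Y _ mY hY hN.
pose Z := [set w | \sum_(b : E') G w b = 0].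
have PZ : P Z = 1%E.
  rewrite -((hgauss (fun=> 1)).2 q1); congr (P _).
  by rewrite /Z; apply/funext => w /=; rewrite !S2 !mul1r.
have mZ : measurable Z.
  have := mlin (fun=> 1) measurableT _ (measurable_set1 (0:R)).
  rewrite setTI; congr (measurable _).
  by rewrite /Z; apply/funext => w /=; rewrite !S2 !mul1r.
have mpos : measurable [set w | 0 < Y w].
  have := mY measurableT _ (@measurable_itv R `]0, +oo[).
  rewrite setTI; congr (measurable _).
  by apply/funext => w /=; rewrite in_itv /= andbT.
have mneg : measurable [set w | Y w < 0].
  have := mY measurableT _ (@measurable_itv R `]-oo, 0[).
  by rewrite setTI; congr (measurable _).
have Bsum nu x : M nu -> \sum_(b : E') x b * B nu b = (x b1 - x b2) * c nu.
  by move=> Mn; rewrite S2 hB2 // mulrN mulrBl.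
have regmax : [set w | region F alpha pi B numax (G w)] = Z `&` [set w | 0 < Y w].
  apply/seteqP; split => w /=.
  - move=> [hz hr]; split => //.
    have := hr numin Mmin (fun h => nmm (esym h)).
    by rewrite !Bsum //; apply: pos_of_lt.
  - move=> [hz hp]; split => // nu' Mn' nn'.
    by rewrite !Bsum //; apply: mul_lt_pos => //; apply: smax.
have regmin : [set w | region F alpha pi B numin (G w)] = Z `&` [set w | Y w < 0].
  apply/seteqP; split => w /=.
  - move=> [hz hr]; split => //.
    have := hr numax Mmax nmm.
    by rewrite !Bsum //; apply: neg_of_lt.
  - move=> [hz hp]; split => // nu' Mn' nn'.
    by rewrite !Bsum //; apply: mul_lt_neg => //; apply: smin.
have regoth nu : M nu -> nu <> numax -> nu <> numin ->
    [set w | region F alpha pi B nu (G w)] = set0.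
  move=> Mn n1 n2; apply/seteqP; split => w // [hz hr].
  have h1 := hr numax Mmax (fun h => n1 (esym h)).
  have h2 := hr numin Mmin (fun h => n2 (esym h)).
  rewrite !Bsum // in h1 h2.
  have := @neg_of_lt R _ _ _ (smax _ Mn n1) h1.
  have := @pos_of_lt R _ _ _ (smin _ Mn n2) h2.
  by move=> a b; have := lt_trans a b; rewrite ltxx.
have wmax : weight F alpha pi P G B numax = (1 / 2)%:E.
  by rewrite /weight regmax probI1.
have wmin : weight F alpha pi P G B numin = (1 / 2)%:E.
  by rewrite /weight regmin probI1.
exists numax, numin; split => //; split; last by split.
apply/seteqP; split => nu /=.
- move=> [Mn wp].
  case: (pselect (nu = numax)) => [->|n1]; first by left.
  case: (pselect (nu = numin)) => [->|n2]; first by right.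
  by move: wp; rewrite /weight regoth // measure0 ltxx.
- by move=> [->|->]; split => //; [rewrite wmax|rewrite wmin]; rewrite lte_fin.
Qed.
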